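(* Let $\lambda>0$ and consider the problem $\min_{x\in\mathbb{R}} f(x)=\frac{\lambda}{2}x^2$, whose minimizer is $x^\star=0$. Let $a,b\in\mathbb{R}$ satisfy $a^2+4b\le 0$, and consider the optimization method $x_{k+1}=a x_k+b x_{k-1}$ ($k\ge 1$), started from arbitrary $x_0,x_1\in\mathbb{R}$. Assume the method is convergent. Then $$V(x_k,x_{k-1},x_{k-2})=x_{k-1}^2-x_k x_{k-2}$$ is a Lyapunov function for this method.
   Context: The method is called convergent if $x_k\to 0$ for every choice of initial values $x_0,x_1$; equivalently, the iteration matrix $M=\begin{bmatrix} a & b\\ 1 & 0\end{bmatrix}$ (which maps $(x_k,x_{k-1})^T$ to $(x_{k+1},x_k)^T$) has spectral radius $\rho(M)<1$. A function $V(x_k,x_{k-1},x_{k-2})$ is called a Lyapunov function for the method if, along every trajectory of the method, $V(x_k,x_{k-1},x_{k-2})\ge 0$ for all $k\ge 2$ and $V(x_{k+1},x_k,x_{k-1})\le V(x_k,x_{k-1},x_{k-2})$ for all $k\ge 2$ (i.e. it is nonnegative and monotonically non-increasing along the iterates). *)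

(* Defs.v *)
From Stdlib Require Import Reals Lra Lia.
Open Scope R_scope.

Definition method_traj (a b : R) (x : nat -> R) : Prop :=
  forall k : nat, (1 <= k)%nat -> x (S k) = a * x k + b * x (k - 1)%nat.

Definition convergent (a b : R) : Prop :=
  forall x : nat -> R, method_traj a b x -> Un_cv x 0.

Definition V (xk xk1 xk2 : R) : R := xk1 ^ 2 - xk * xk2.

Definition is_lyapunov (a b : R) (W : R -> R -> R -> R) : Prop :=
  forall x : nat -> R, method_traj a b x ->
    forall k : nat, (2 <= k)%nat ->
      0 <= W (x k) (x (k - 1)%nat) (x (k - 2)%nat) /\
      W (x (S k)) (x k) (x (k - 1)%nat) <= W (x k) (x (k - 1)%nat) (x (k - 2)%nat).

(* Main.v *)
Require Import Defs.
From Stdlib Require Import Reals Lra Lia Psatz.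
Open Scope R_scope.

Fixpoint pr (a b : R) (n : nat) : R * R :=
  match n with
  | O => (0, 1)
  | S m => let p := pr a b m in (snd p, a * snd p + b * fst p)
  end.

Definition tr a b n := fst (pr a b n).

Lemma tr_traj a b : method_traj a b (tr a b).
Proof.
  intros k Hk. destruct k as [|j]; [lia|].
  replace (S j - 1)%nat with j by lia.
  unfold tr; simpl. reflexivity.
Qed.

Lemma tr_step a b n : tr a b (S (S n)) = a * tr a b (S n) + b * tr a b n.
Proof. unfold tr; simpl. reflexivity. Qed.

Lemma b_ge a b : convergent a b -> -1 < b.
Proof.
  intros hc. destruct (Rlt_le_dec (-1) b) as [h|h]; [exact h|].
  exfalso.
  assert (HW : forall n, 1 <= tr a b (S n) ^ 2 - tr a b (S (S n)) * tr a b n).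
  { induction n.
    - unfold tr; simpl. lra.
    - rewrite (tr_step a b (S n)), (tr_step a b n).
      rewrite (tr_step a b n) in IHn.
      set (u := tr a b n) in *. set (v := tr a b (S n)) in *.
      set (w := a * v + b * u) in *.
      assert (E : w ^ 2 - (a * w + b * v) * v = - b * (v ^ 2 - w * u)).
      { unfold w. ring. }
      rewrite E. nra. }
  specialize (hc _ (tr_traj a b) (1/2) ltac:(lra)).
  destruct hc as [N HN].
  pose proof (HN N ltac:(lia)) as H0.
  pose proof (HN (S N) ltac:(lia)) as H1.
  pose proof (HN (S (S N)) ltac:(lia)) as H2.
  pose proof (HW N) as HWN.
  unfold R_dist in *. rewrite Rminus_0_r in *.
  apply Rabs_def2 in H0. apply Rabs_def2 in H1. apply Rabs_def2 in H2.
  nra.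
Qed.

Theorem theorem1 (lambda a b : R) (hlam : 0 < lambda)
  (hab : a ^ 2 + 4 * b <= 0) (hconv : convergent a b) :
  is_lyapunov a b V.
Proof.
  pose proof (b_ge a b hconv) as hb.
  intros x hx k hk.
  destruct k as [|[|j]]; [lia|lia|].
  replace (S (S j) - 1)%nat with (S j) by lia.
  replace (S (S j) - 2)%nat with j by lia.
  assert (E1 : x (S (S j)) = a * x (S j) + b * x j).
  { rewrite hx by lia. replace (S j - 1)%nat with j by lia. reflexivity. }
  assert (E2 : x (S (S (S j))) = a * x (S (S j)) + b * x (S j)).
  { rewrite hx by lia. replace (S (S j) - 1)%nat with (S j) by lia. reflexivity. }
  unfold V. rewrite E2. rewrite E1.
  set (y := x (S j)). set (z := x j).
  assert (Hpos : 0 <= y ^ 2 - (a * y + b * z) * z).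
  { assert (4 * (y ^ 2 - (a * y + b * z) * z) = (2*y - a*z)^2 + (-(a^2+4*b)) * z^2) by ring.
    assert (0 <= (2*y - a*z)^2) by (simpl; rewrite Rmult_1_r; apply Rle_0_sqr). assert (0 <= (-(a^2+4*b)) * z^2) by (apply Rmult_le_pos; [lra| simpl; rewrite Rmult_1_r; apply Rle_0_sqr]). lra. }
  assert (E : (a * y + b * z) ^ 2 - (a * (a * y + b * z) + b * y) * y
              = - b * (y ^ 2 - (a * y + b * z) * z)) by ring.
  split; [exact Hpos|].
  rewrite E. nra.
Qed.
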